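(* For every integer $k\ge 3$ there exist a finite connected graph $G$ and an isometric subgraph $H$ of $G$ such that $c(H)=1$, but $H$ is not $k$-guardable in $G$ (i.e., $k$ cops cannot guard $H$ in $G$).
   Context: All graphs are finite, simple and connected. A subgraph $H$ of $G$ is isometric if $d_H(x,y)=d_G(x,y)$ for all $x,y\in V(H)$. Cops and robber game on $G$: the cops first choose starting vertices, then the robber; then they alternate turns, each player moving each piece to an adjacent vertex or staying; a capture occurs when a cop occupies the robber's vertex. The cop number $c(H)$ is the minimum number of cops that can guarantee capture on $H$. For an isometric subgraph $H$ of $G$ and $k\ge1$, $H$ is $k$-guardable in $G$ if $k$ cops have a strategy such that after finitely many moves the $k$ cops are on vertices of $H$ and from then on always stay in $H$, and whenever the robber enters $H$ he is captured by one of these cops in the next turn. *)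

(* Defs.v *)
From mathcomp Require Import all_boot.
Set Implicit Arguments. Unset Strict Implicit. Unset Printing Implicit Defensive.

Definition simple_graph (T : finType) (e : rel T) : Prop :=
  symmetric e /\ irreflexive e.

Definition connected_graph (T : finType) (e : rel T) : Prop :=
  forall x y : T, connect e x y.

Definition dist_le (T : finType) (e : rel T) (n : nat) (x y : T) : Prop :=
  exists p : seq T, [/\ path e x p, last x p = y & size (p) <= n].

Definition is_subgraph (T : finType) (e : rel T) (S : {set T}) (eH : rel T) : Prop :=
  forall x y, eH x y -> [/\ x \in S, y \in S & e x y].

(* H isometric in G: d_H(x,y) = d_G(x,y) for all x y in V(H)
   (equality of distances expressed as equality of all sublevel sets) *)
Definition isometric (T : finType) (e : rel T) (S : {set T}) (eH : rel T) : Prop :=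
  is_subgraph e S eH /\
  forall x y, x \in S -> y \in S -> forall n, dist_le eH n x y <-> dist_le e n x y.

Definition step (V : finType) (e : rel V) (x y : V) : bool := (x == y) || e x y.

Definition robber_walk (V : finType) (A : {set V}) (e : rel V) (R : nat -> V) : Prop :=
  R 0 \in A /\ forall t, R t.+1 \in A /\ step e (R t) (R t.+1).

(* Cops position in round t (t = 0: initial placement,
   chosen before the robber; round t+1: cops' move after robber's t-th position). *)
Definition cpos (V : finType) (k : nat) (sigma : seq V -> 'I_k -> V)
  (R : nat -> V) (t : nat) : 'I_k -> V := sigma (mkseq R t).

Definition legal_cops (V : finType) (A : {set V}) (e : rel V) (k : nat)
  (sigma : seq V -> 'I_k -> V) (R : nat -> V) : Prop :=
  forall t (j : 'I_k), cpos sigma R t j \in A /\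
                       step e (cpos sigma R t j) (cpos sigma R t.+1 j).

(* capture after the robber's t-th placement/move *)
Definition caught_at (V : finType) (k : nat) (sigma : seq V -> 'I_k -> V)
  (R : nat -> V) (t : nat) : Prop := exists j, cpos sigma R t j = R t.

(* capture after the cops' move following the robber's t-th position *)
Definition caught_after (V : finType) (k : nat) (sigma : seq V -> 'I_k -> V)
  (R : nat -> V) (t : nat) : Prop := exists j, cpos sigma R t.+1 j = R t.

Definition captured (V : finType) (k : nat) (sigma : seq V -> 'I_k -> V)
  (R : nat -> V) : Prop := exists t, caught_at sigma R t \/ caught_after sigma R t.

Definition cop_win (V : finType) (A : {set V}) (e : rel V) (k : nat) : Prop :=
  exists sigma : seq V -> 'I_k -> V,
    forall R, robber_walk A e R -> legal_cops A e sigma R /\ captured sigma R.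

Definition cop_number_is (V : finType) (A : {set V}) (e : rel V) (n : nat) : Prop :=
  cop_win A e n /\ forall m, m < n -> ~ cop_win A e m.

Definition not_caught_upto (V : finType) (k : nat) (sigma : seq V -> 'I_k -> V)
  (R : nat -> V) (i : nat) : Prop :=
  forall t, t <= i -> ~ caught_at sigma R t /\ (t < i -> ~ caught_after sigma R t).

Definition guardable (T : finType) (e : rel T) (S : {set T}) (k : nat) : Prop :=
  exists sigma : seq T -> 'I_k -> T,
    forall R, robber_walk [set: T] e R ->
      legal_cops [set: T] e sigma R /\
      exists N, forall i, N <= i -> not_caught_upto sigma R i ->
        (forall j, cpos sigma R i j \in S) /\
        (R i \in S -> exists j, cpos sigma R i.+1 j = R i).

(* Main.v *)
Require Import Defs.
From mathcomp Require Import all_boot.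
Set Implicit Arguments. Unset Strict Implicit. Unset Printing Implicit Defensive.

Section G.
Variable n : nat.
Definition Q := {ffun 'I_n -> bool}.
Definition V := ((Q + Q) + (Q * Q))%type.
Definition flip (x : Q) (i : 'I_n) : Q := [ffun l => if l == i then ~~ x l else x l].
Definition adjQ (x y : Q) : bool := [exists i, y == flip x i].
Definition Wv (x : Q) : V := inl (inl x).
Definition Hv (x : Q) : V := inl (inr x).
Definition Kv (a b : Q) : V := inr (a, b).
Definition edge (u v : V) : bool :=
  match u, v with
  | inl (inl x), inl (inr y) => adjQ x y
  | inl (inr y), inl (inl x) => adjQ x y
  | inl (inr y), inr (a, b) => (y == a) || (y == b)
  | inr (a, b), inl (inr y) => (y == a) || (y == b)
  | inr p, inr q => p != q
  | _, _ => false
  end.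
Definition Sset : {set V} := [set v | if v is inl (inl _) then false else true].
Definition eH (u v : V) : bool := [&& u \in Sset, v \in Sset & edge u v].

Lemma flipK x i : flip (flip x i) i = x.
Proof. by apply/ffunP => l; rewrite !ffunE; case: eqP => // ->; rewrite negbK. Qed.

Lemma flip_inj x : injective (flip x).
Proof.
move=> i j H; have := congr1 (fun f : Q => f i) H; rewrite !ffunE eqxx.
by case: (i =P j) => // _; case: (x i).
Qed.

Lemma adjQC x y : adjQ x y = adjQ y x.
Proof.
by apply/existsP/existsP => -[i /eqP ->]; exists i; rewrite flipK.
Qed.

Lemma adjQ_irr x : adjQ x x = false.
Proof.
apply/existsP => -[i /eqP H]; have := congr1 (fun f : Q => f i) H.
by rewrite ffunE eqxx; case: (x i).
Qed.

Lemma card_inj1 (f : 'I_n -> Q) a : injective f -> #|[pred i | f i == a]| <= 1.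
Proof.
move=> fi; case: (pickP [pred i | f i == a]) => [i0 /= /eqP H0|none].
  rewrite (@eq_card _ _ (pred1 i0)) ?card1 // => i /=.
  by apply/eqP/eqP => [|->//]; rewrite -H0 => /fi.
by rewrite (eq_card0 none).
Qed.

Lemma card_inj2 (f : 'I_n -> Q) a b : injective f -> #|[pred i | (f i == a) || (f i == b)]| <= 2.
Proof.
move=> fi.
have -> : #|[pred i | (f i == a) || (f i == b)]| = #|[set i | f i == a] :|: [set i | f i == b]|.
  by apply: eq_card => i; rewrite !inE.
rewrite cardsU; apply: leq_trans (leq_subr _ _) _.
have h1 : #|[set i | f i == a]| <= 1.
  by apply: leq_trans (card_inj1 a fi); rewrite leq_eqVlt; apply/orP; left; apply/eqP; apply: eq_card => i; rewrite inE.
have h2 : #|[set i | f i == b]| <= 1.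
  by apply: leq_trans (card_inj1 b fi); rewrite leq_eqVlt; apply/orP; left; apply/eqP; apply: eq_card => i; rewrite inE.
exact: (leq_add h1 h2).
Qed.

Lemma L2 x z : z != x -> #|[pred i | adjQ z (flip x i)]| <= 2.
Proof.
move=> nzx.
set D := [set l | x l != z l].
have key : forall i j, flip x i = flip z j -> (i != j) /\ D = [set i; j].
  move=> i j H.
  have Hl := fun l => congr1 (fun f : Q => f l) H.
  have ij : i != j.
    apply/eqP => eij; move: nzx; rewrite eq_sym => /eqP; apply; apply/ffunP => l.
    move: (Hl l); rewrite !ffunE -eij; case: (l == i) => //.
    by case: (x l); case: (z l).
  split => //; apply/setP => l; rewrite !inE.
  move: (Hl l); rewrite !ffunE.
  case: (l =P i) => [->|li]; case: (l =P j) => [lj|lj] //=.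
  - by rewrite (negbTE ij); case: (x i); case: (z i).
  - by rewrite (negbTE ij); case: (x i); case: (z i).
  - by case: (x l); case: (z l).
  - by case: (x l); case: (z l).
case: (pickP [pred i | adjQ z (flip x i)]) => [i0 /= /existsP [j0 /eqP H0]|none].
  have [ij HD] := key _ _ H0.
  have <- : #|D| = 2 by rewrite HD cards2 ij.
  apply: subset_leq_card; apply/subsetP => i /= /existsP [j /eqP Hj].
  by have [ij' ->] := key _ _ Hj; rewrite !inE eqxx.
by rewrite (eq_card0 none).
Qed.

Definition isB (v : V) : bool := if v is inr _ then false else true.
Definition nbr (r : V) (i : 'I_n) : V :=
  match r with inl (inl x) => Hv (flip x i) | inl (inr x) => Wv (flip x i) | _ => r end.

Lemma cover r c : isB r -> c != r -> #|[pred i | step edge c (nbr r i)]| <= 2.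
Proof.
case: r => [[x|x]|//] _; case: c => [[z|z]|[a b]] ncr /=; rewrite /step /=.
- rewrite (@eq_card _ _ [pred i | adjQ z (flip x i)]) ?L2 //.
- apply: leq_trans (_ : #|[pred i | flip x i == z]| <= 2).
    rewrite leq_eqVlt; apply/orP; left; apply/eqP; apply: eq_card => i /=.
    by rewrite !inE /= orbF; apply/eqP/eqP => [[->]|->].
  by apply: leq_trans (card_inj1 z (@flip_inj x)) _.
- apply: leq_trans (card_inj2 a b (@flip_inj x)).
  by rewrite leq_eqVlt; apply/orP; left; apply/eqP; apply: eq_card => i /=.
- apply: leq_trans (_ : #|[pred i | flip x i == z]| <= 2).
    rewrite leq_eqVlt; apply/orP; left; apply/eqP; apply: eq_card => i /=.
    by rewrite !inE /= orbF; apply/eqP/eqP => [[->]|->].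
  by apply: leq_trans (card_inj1 z (@flip_inj x)) _.
- rewrite (@eq_card _ _ [pred i | adjQ z (flip x i)]) ?L2 //.
  by move=> i; rewrite !inE /= adjQC.
- suff -> : #|[pred: 'I_n | false]| = 0 by [].
  by apply: eq_card0.
Qed.
End G.

Lemma card_bigcup2 k m (P : 'I_k -> pred 'I_m) : (forall j, #|P j| <= 2) ->
  #|\bigcup_(j < k) [set i | P j i]| <= 2 * k.
Proof.
elim: k P => [|k IH] P HP; first by rewrite big_ord0 cards0.
rewrite big_ord_recr /= cardsU; apply: leq_trans (leq_subr _ _) _.
rewrite mulnS addnC; apply: leq_add.
  by apply: leq_trans (HP ord_max); rewrite leq_eqVlt; apply/orP; left; apply/eqP; apply: eq_card => i; rewrite inE.
exact: (IH (fun j => P (widen_ord (leqnSn k) j))).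
Qed.

Lemma avoid k m (P : 'I_k -> pred 'I_m) : (forall j, #|P j| <= 2) -> 2 * k < m ->
  exists i, forall j, ~~ P j i.
Proof.
move=> HP Hk.
have cU := card_bigcup2 HP.
set U := \bigcup_(j < k) [set i | P j i] in cU.
have : 0 < #|~: U|.
  have := cardsC U; rewrite card_ord => E.
  rewrite -(ltn_add2l #|U|) addn0 E.
  exact: leq_ltn_trans cU Hk.
case/card_gt0P => i; rewrite inE => Hi; exists i => j.
apply/negP => Pji; move/negP: Hi; apply; apply/bigcupP; exists j => //; by rewrite inE.
Qed.

Lemma card_injT (T : eqType) m (f : 'I_m -> T) a : injective f -> #|[pred i | f i == a]| <= 1.
Proof.
move=> fi; case: (pickP [pred i | f i == a]) => [i0 /= /eqP H0|none].
  rewrite (@eq_card _ _ (pred1 i0)) ?card1 // => i /=.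
  by apply/eqP/eqP => [|->//]; rewrite -H0 => /fi.
by rewrite (eq_card0 none).
Qed.

Definition x0 n : Q n := [ffun _ => false].
Definition isH n (v : V n) : bool := if v is inl (inr _) then true else false.

Section Robber.
Variables (n k : nat) (sigma : seq (V n) -> 'I_k -> V n).
Hypothesis Hk : 2 * k < n.

Definition mv (C : 'I_k -> V n) (r : V n) : V n :=
  if [pick i | [forall j, ~~ step (@edge n) (C j) (nbr r i)]] is Some i then nbr r i else r.
Definition rstar (C : 'I_k -> V n) : V n :=
  if [pick i | [forall j, C j != Wv (flip (x0 n) i)]] is Some i then Wv (flip (x0 n) i) else Wv (x0 n).
Definition next (s : seq (V n)) : V n :=
  if s is [::] then mv (sigma [::]) (rstar (sigma [::])) else mv (sigma s) (last (Wv (x0 n)) s).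
Fixpoint hist (t : nat) : seq (V n) := if t is t'.+1 then rcons (hist t') (next (hist t')) else [::].
Definition Rob t := next (hist t).

Lemma mkseq_hist t : mkseq Rob t = hist t.
Proof. by elim: t => // t IH; rewrite mkseqS IH. Qed.

Lemma next_rcons s x : next (rcons s x) = mv (sigma (rcons s x)) x.
Proof. by case: s => [|y s] /=; rewrite ?last_rcons. Qed.

Lemma RobS t : Rob t.+1 = mv (sigma (hist t.+1)) (Rob t).
Proof. by rewrite /Rob /= next_rcons. Qed.

Lemma cposE t : cpos sigma Rob t = sigma (hist t).
Proof. by rewrite /cpos mkseq_hist. Qed.

Lemma nbrB (r : V n) (i : 'I_n) : isB r -> isB (nbr r i).
Proof. by case: r => [[x|x]|]. Qed.

Lemma nbr_edge (r : V n) (i : 'I_n) : isB r -> edge r (nbr r i).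
Proof.
case: r => [[x|x]|] //= _; apply/existsP; exists i => //.
by rewrite flipK.
Qed.

Lemma nbrH (r : V n) (i : 'I_n) : isB r -> isH (nbr r i) = ~~ isH r.
Proof. by case: r => [[x|x]|]. Qed.

Lemma mv_cases C r : mv C r = r \/ exists i, mv C r = nbr r i.
Proof. rewrite /mv; case: pickP => [i _|_]; [right; exists i|left]; done. Qed.

Lemma mv_spec C r : isB r -> (forall j, C j != r) ->
  exists i, mv C r = nbr r i /\ forall j, ~~ step (@edge n) (C j) (nbr r i).
Proof.
move=> Br Cr.
have [i Hi] := @avoid k n (fun j i => step (@edge n) (C j) (nbr r i)) (fun j => cover Br (Cr j)) Hk.
rewrite /mv; case: pickP => [i' /forallP Hi'|none]; first by exists i'.
by move: (none i) => /forallP; case => j; apply: Hi.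
Qed.

Lemma rstar_spec C : isB (rstar C) /\ forall j, C j != rstar C.
Proof.
have inj : injective (fun i => Wv (flip (x0 n) i)).
  by move=> i j [] /flip_inj.
have [i Hi] := @avoid k n (fun j i => Wv (flip (x0 n) i) == C j)
  (fun j => leq_trans (card_injT (C j) inj) (leqnSn 1)) Hk.
rewrite /rstar; case: pickP => [i' /forallP Hi'|none]; first by split.
by move: (none i) => /forallP; case => j; rewrite eq_sym; apply: Hi.
Qed.

Lemma Rob_B t : isB (Rob t).
Proof.
elim: t => [|t IH].
  rewrite /Rob /=; have [B _] := rstar_spec (sigma [::]).
  by case: (mv_cases (sigma [::]) (rstar (sigma [::]))) => [->|[i ->]] //; apply: nbrB.
by rewrite RobS; case: (mv_cases (sigma (hist t.+1)) (Rob t)) => [->|[i ->]] //; apply: nbrB.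
Qed.

Lemma Rob_walk : robber_walk [set: V n] (@edge n) Rob.
Proof.
split; first by rewrite inE.
move=> t; split; first by rewrite inE.
rewrite RobS /step; case: (mv_cases (sigma (hist t.+1)) (Rob t)) => [->|[i ->]]; first by rewrite eqxx.
by rewrite nbr_edge ?orbT // Rob_B.
Qed.

Lemma Rob_inv : legal_cops [set: V n] (@edge n) sigma Rob ->
  forall t, (forall j, ~~ step (@edge n) (cpos sigma Rob t j) (Rob t)) /\
            isH (Rob t.+1) = ~~ isH (Rob t).
Proof.
move=> leg.
have inv : forall t, forall j, ~~ step (@edge n) (cpos sigma Rob t j) (Rob t).
  elim=> [|t IH].
    rewrite cposE /Rob /=; have [B nC] := rstar_spec (sigma [::]).
    by have [i [-> Hi]] := mv_spec B nC.
  have nC : forall j, sigma (hist t.+1) j != Rob t.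
    move=> j; apply/eqP => E; have [_ st] := leg t j.
    by move: (IH j); rewrite -E -(cposE t.+1) st.
  rewrite cposE RobS; have [i [-> Hi]] := mv_spec (Rob_B t) nC.
  by move=> j; apply: Hi.
move=> t; split; first exact: inv.
have nC : forall j, sigma (hist t.+1) j != Rob t.
  move=> j; apply/eqP => E; have [_ st] := leg t j.
  by move: (inv t j); rewrite -E -(cposE t.+1) st.
rewrite RobS; have [i [-> _]] := mv_spec (Rob_B t) nC.
by rewrite nbrH // Rob_B.
Qed.

End Robber.

Lemma not_guard n k : 2 * k < n -> ~ guardable (@edge n) (@Sset n) k.
Proof.
move=> Hk [sigma Hs].
have [leg [N HN]] := Hs _ (Rob_walk sigma Hk).
have inv := Rob_inv Hk leg.
have nc : forall i, not_caught_upto sigma (Rob sigma) i.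
  move=> i t _; split.
    case=> j E; have [H _] := inv t; by move: (H j); rewrite E /step eqxx.
  move=> _ [j E]; have [H _] := inv t; have [_ st] := leg t j; by move: (H j); rewrite -E st.
have [i [Ni Hi]] : exists i, N <= i /\ isH (Rob sigma i).
  case H: (isH (Rob sigma N)); first by exists N.
  exists N.+1; split => //; have [_ ->] := inv N; by rewrite H.
have [_ Hcap] := HN i Ni (nc i).
have [j E] : exists j, cpos sigma (Rob sigma) i.+1 j = Rob sigma i.
  apply: Hcap; move: Hi; rewrite inE; by case: (Rob sigma i) => [[]|].
have [H _] := inv i; have [_ st] := leg i j; by move: (H j); rewrite -E st.
Qed.

Section Cop.
Variable n : nat.
Definition c0 : V n := Kv (x0 n) (x0 n).
Definition g (c r : V n) : V n :=
  if step (@eH n) c r then r else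
  match c, r with
  | inl (inr y), _ => Kv y y
  | inr _, inl (inr z) => Kv z z
  | _, _ => c end.
Definition copS (s : seq (V n)) : 'I_1 -> V n := fun _ => foldl g c0 s.

Lemma stepK (p q : Q n * Q n) : step (@eH n) (inr p) (inr q).
Proof.
rewrite /step /eH !inE /=.
by case: (p =P q) => [->|/eqP ne]; rewrite ?eqxx //; case: p {ne} => a b; rewrite orbT.
Qed.

Lemma g_S c r : c \in @Sset n -> r \in @Sset n -> g c r \in @Sset n /\ step (@eH n) c (g c r).
Proof.
move=> cS rS; rewrite /g; case: ifP => [st|nst]; first by [].
clear nst; move: cS; rewrite inE; case: c => [[x|y]|p] //= _.
  by split; [rewrite inE | rewrite /step /eH !inE /= eqxx ?orbT].
move: rS; rewrite inE; case: r => [[x|z]|q] //= _; split; rewrite ?inE //; try (by rewrite /step eqxx).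
exact: stepK.
Qed.

Lemma cop_win1 : cop_win (@Sset n) (@eH n) 1.
Proof.
exists copS => R [R0 HR].
have RS : forall t, R t \in @Sset n by case=> [|t] //; have [] := HR t.
have cpE : forall t j, cpos copS R t j = foldl g c0 (mkseq R t) by [].
have cpS : forall t, cpos copS R t.+1 ord0 = g (cpos copS R t ord0) (R t).
  by move=> t; rewrite !cpE mkseqS foldl_rcons.
have cIn : forall t, cpos copS R t ord0 \in @Sset n.
  elim=> [|t IH]; first by rewrite cpE inE.
  by rewrite cpS; have [] := g_S IH (RS t).
split.
  move=> t j; rewrite !(cpE _ j) -!(cpE _ ord0); split; first exact: cIn.
  by rewrite cpS; have [] := g_S (cIn t) (RS t).
case st0: (step (@eH n) c0 (R 0)).
  exists 0; right; exists ord0; by rewrite cpS cpE /= /g st0.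
have [z Rz] : exists z, R 0 = Hv z.
  have := RS 0; have := st0; case: (R 0) => [[x|z]|p]; rewrite ?inE //.
  - by move=> _ _; exists z.
  - by rewrite stepK.
have cp1 : cpos copS R 1 ord0 = Kv z z by rewrite cpS cpE /= /g st0 Rz.
have [_ st1] := HR 0.
have st2 : step (@eH n) (Kv z z) (R 1).
  move: st1 (RS 1); rewrite Rz; case: (R 1) => [[x|z']|p]; rewrite ?inE //; last by rewrite stepK.
  move=> /orP [/eqP [<-] _ | /and3P [_ _ //]].
  by rewrite /step /eH !inE /= eqxx ?orbT.
exists 1; right; exists ord0; by rewrite cpS cp1 /g st2.
Qed.

End Cop.

Lemma edge_sym n : symmetric (@edge n).
Proof.
move=> u v; case: u => [[x|x]|[a b]]; case: v => [[y|y]|[c d]] //=.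
by rewrite eq_sym.
Qed.

Lemma edge_irr n : irreflexive (@edge n).
Proof. by case=> [[x|x]|[a b]] //=; rewrite ?adjQ_irr ?eqxx. Qed.

Lemma conn_c0 n (i0 : 'I_n) (u : V n) : connect (@edge n) u (c0 n).
Proof.
have Kc : forall p : Q n * Q n, connect (@edge n) (inr p) (c0 n).
  move=> p; have [->|ne] := eqVneq p (x0 n, x0 n); first exact: connect0.
  by apply: connect1; case: p ne => a b ne /=.
have Hc : forall y, connect (@edge n) (Hv y) (c0 n).
  move=> y; apply: connect_trans (Kc (y, y)); apply: connect1; by rewrite /= eqxx.
case: u => [[x|y]|p]; [|exact: Hc|exact: Kc].
apply: connect_trans (Hc (flip x i0)); apply: connect1.
exact: (@nbr_edge n (Wv x) i0).
Qed.

Lemma dist0 (T : finType) (e : rel T) x : dist_le e 0 x x.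
Proof. by exists [::]. Qed.

Lemma dist_step (T : finType) (e : rel T) a x m y : dist_le e a x m -> step e m y -> dist_le e a.+1 x y.
Proof.
case=> p [Hp Hl Hs]; rewrite /step; case/orP => [/eqP <-|emy].
  by exists p; split => //; apply: leq_trans Hs _.
exists (rcons p y); split; rewrite ?last_rcons ?size_rcons //.
by rewrite rcons_path Hp Hl.
Qed.

Lemma dist_mono (T : finType) (e : rel T) a b x y : a <= b -> dist_le e a x y -> dist_le e b x y.
Proof. by move=> ab [p [Hp Hl Hs]]; exists p; split => //; apply: leq_trans ab. Qed.

Lemma H2 n (x y : V n) : x \in Sset n -> y \in Sset n -> dist_le (@eH n) 2 x y.
Proof.
have eHK : forall a b, step (@eH n) (Hv a) (Kv a b) /\ step (@eH n) (Kv a b) (Hv b).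
  by move=> a b; rewrite /step /eH !inE /= !eqxx ?orbT.
rewrite !inE; case: x => [[x|a]|p] //; case: y => [[y|b]|q] // _ _.
- apply: (dist_step (m := Kv a b)); last by case: (eHK a b).
  by apply: (dist_step (m := Hv a)); [apply: dist0|case: (eHK a b)].
- apply: (dist_step (m := Kv a a)); last exact: stepK.
  by apply: (dist_step (m := Hv a)); [apply: dist0|case: (eHK a a)].
- apply: (dist_step (m := Kv b b)); last by case: (eHK b b).
  by apply: (dist_step (m := inr p)); [apply: dist0|apply: stepK].
- apply: (dist_step (m := inr p)); last exact: stepK.
  by apply: (dist_step (m := inr p)); [apply: dist0|rewrite /step eqxx].
Qed.

Lemma iso n : isometric (@edge n) (Sset n) (@eH n).
Proof.
split; first by move=> x y /and3P [].
move=> x y xS yS m; split.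
  case=> p [Hp Hl Hs]; exists p; split => //.
  by apply: sub_path Hp => u v /and3P [].
case=> p [Hp Hl Hs]; move: p Hp Hl Hs => [|z [|z' p]] /=.
- by move=> _ <- _; exists [::].
- move=> /andP [exz _] Ez Hs; exists [:: z]; split => //=.
  by rewrite /eH xS Ez yS -Ez exz.
- move=> _ _ Hs; apply: dist_mono (H2 xS yS).
  by apply: leq_trans Hs.
Qed.

Lemma copnum n : cop_number_is (Sset n) (@eH n) 1.
Proof.
split; first exact: cop_win1.
move=> m; rewrite ltnS leqn0 => /eqP -> [sig Hsig].
have w : robber_walk (Sset n) (@eH n) (fun _ => c0 n).
  by split; [rewrite inE | move=> t; split; [rewrite inE | rewrite /step eqxx]].
have [_ [t [[j _]|[j _]]]] := Hsig _ w; by case: j.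
Qed.

Theorem theorem3p1 : forall k : nat, 3 <= k ->
  exists (T : finType) (e : rel T) (S : {set T}) (eH : rel T),
    simple_graph e /\ connected_graph e /\ symmetric eH /\ isometric e S eH /\
    cop_number_is S eH 1 /\ ~ guardable e S k.
Proof.
move=> k _.
exists (V (2 * k).+1), (@edge (2 * k).+1), (Sset (2 * k).+1), (@eH (2 * k).+1).
split; first by split; [apply: edge_sym | apply: edge_irr].
split.
  move=> x y; apply: connect_trans (conn_c0 ord0 x) _.
  by rewrite (sym_connect_sym (@edge_sym _)); apply: conn_c0 ord0 y.
split.
  by move=> u v; rewrite /eH edge_sym; case: (u \in _); case: (v \in _).
split; first exact: iso.
split; first exact: copnum.
exact: not_guard (ltnSn _).
Qed.
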